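(* Let $n\geqslant 2$ and let $G$ (gene tree) and $S$ (species tree) be caterpillar trees whose leaves are bijectively labeled by the same set $X$ of $n$ labels, with canonical label vectors $\mathbf g=(g_1,\dots,g_n)$ and $\mathbf s=(s_1,\dots,s_n)$; $G$ and $S$ need not have the same labeled topology. For a label $x$, let $\sigma(x)$ denote the index of $x$ in $\mathbf s$, and for $1\leqslant j\leqslant n-1$ put $F(j)=\max\{\sigma(g_1),\dots,\sigma(g_{j+1})\}-1$. Define the roadblock set $$B_{G,S}=\{(i,j)\in\mathbb Z^2 : 1\leqslant j\leqslant i\leqslant n-1,\ i<F(j)\}.$$ Then there is a bijection between the set of coalescent histories for $(G,S)$ and the set of monotonic lattice paths from $(0,0)$ to $(n-1,n-1)$ that do not cross above the diagonal $y=x$ and that pass through no point of $B_{G,S}$.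
   Context: All trees are binary, rooted and leaf-labeled. A caterpillar tree with $n$ leaves is a tree in which some internal node is descended from all other internal nodes; it has a unique cherry (internal node with exactly two descendant leaves). Its canonical label vector $(x_1,\dots,x_n)$ has $x_1,x_2$ the labels of the two cherry leaves and, for $3\leqslant i\leqslant n$, $x_i$ the label of the leaf separated from the root by $n-i+1$ edges (vectors differing only by swapping $x_1,x_2$ describe the same tree). Internal nodes are numbered $1,\dots,n-1$ from the cherry (node 1) to the root (node $n-1$), so node $i$ has descendant leaves $x_1,\dots,x_{i+1}$; internal edge $i$ is the edge immediately above node $i$, the tree being considered to possess an extra edge above its root (edge $n-1$). A node or edge is considered descended from itself. A coalescent history for $(G,S)$ is a function $h$ from the internal nodes of $G$ to the internal edges of $S$ (including the edge above the root) such that (1) for each internal node $v$ of $G$, every label of a leaf descended from $v$ in $G$ labels a leaf of $S$ descended from edge $h(v)$; and (2) whenever internal node $v_2$ is descended from internal node $v_1$ in $G$, edge $h(v_2)$ is descended from edge $h(v_1)$ in $S$. A monotonic path from $(0,0)$ to $(a,b)$ is a sequence of lattice points starting at $(0,0)$ and ending at $(a,b)$ in which each step adds $(1,0)$ or $(0,1)$; it does not cross above $y=x$ if every point $(x,y)$ on it satisfies $y\leqslant x$. *)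

(* Defs.v *)
From mathcomp Require Import all_boot.
Set Implicit Arguments. Unset Strict Implicit. Unset Printing Implicit Defensive.

(* A caterpillar tree on the label set X with n leaves is given by its
   canonical label vector x = (x_1,...,x_n), an n.-tuple of distinct labels.
   Indices in the paper are 1-based; the tuple is 0-based, so x_k = nth _ x (k-1)
   and the 1-based position of label y in x is (index y x).+1.
   Internal nodes and internal edges are numbered 1..n-1 (1-based naturals). *)

Section Caterpillar.
Variable X : finType.

Definition sigma (n : nat) (s : n.-tuple X) (y : X) : nat := (index y s).+1.

(* leaf labeled y is descended from internal node i of caterpillar x
   (node i has descendant leaves x_1..x_{i+1}) *)
Definition leaf_below_node (n : nat) (x : n.-tuple X) (i : nat) (y : X) : bool :=
  sigma x y <= i.+1.

(* leaf labeled y of S is descended from edge i of S (edge i is immediately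
   above node i, so has the same leaves below it; edge n-1 lies above the root) *)
Definition leaf_below_edge (n : nat) (s : n.-tuple X) (i : nat) (y : X) : bool :=
  leaf_below_node s i y.

(* in a caterpillar the internal nodes form a chain: node i is descended
   from node j iff i <= j; likewise for internal edges (edge n-1 is the top) *)
Definition node_desc (i j : nat) : bool := i <= j.
Definition edge_desc (i j : nat) : bool := i <= j.

(* A function from the internal nodes {1..n-1} of G to the internal edges
   {1..n-1} of S, encoded as a finite function on 'I_(n-1): ordinal k stands
   for node/edge k+1. *)
Definition node_of (n : nat) (k : 'I_n.-1) : nat := (val k).+1.

Definition coalescent_history (n : nat) (g s : n.-tuple X)
    (h : {ffun 'I_n.-1 -> 'I_n.-1}) : Prop :=
  (forall v : 'I_n.-1, forall y : X,
      leaf_below_node g (node_of v) y -> leaf_below_edge s (node_of (h v)) y)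
  /\
  (forall v1 v2 : 'I_n.-1, node_desc (node_of v2) (node_of v1) ->
      edge_desc (node_of (h v2)) (node_of (h v1))).

Definition Fmax (n : nat) (g s : n.-tuple X) (j : nat) : nat :=
  (\max_(y <- take j.+1 g) sigma s y) - 1.

Definition roadblock (n : nat) (g s : n.-tuple X) (p : nat * nat) : bool :=
  let: (i, j) := p in [&& 1 <= j, j <= i, i <= n - 1 & i < Fmax g s j].
End Caterpillar.

(* Lattice paths: sequences of lattice points (in N^2, as they are monotone
   from (0,0)). *)
Definition lattice_step (u v : nat * nat) : bool :=
  (v == (u.1.+1, u.2)) || (v == (u.1, u.2.+1)).

Definition monotonic_path (a b : nat) (p : seq (nat * nat)) : bool :=
  match p with
  | [::] => false
  | u :: q => [&& u == (0, 0), path lattice_step u q & last u q == (a, b)]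
  end.

Definition not_above_diagonal (p : seq (nat * nat)) : bool :=
  all (fun u => u.2 <= u.1) p.

Definition good_path (X : finType) (n : nat) (g s : n.-tuple X)
    (p : seq (nat * nat)) : bool :=
  [&& monotonic_path n.-1 n.-1 p, not_above_diagonal p
    & all (fun u => ~~ roadblock g s u) p].

(* Main.v *)
Require Import Defs.
From mathcomp Require Import all_boot.
From mathcomp Require Import zify.
From Stdlib Require Import ProofIrrelevance.

Definition hrun (x c y : nat) : seq (nat * nat) := [seq (k, y) | k <- iota x.+1 (c - x)].

Fixpoint mk (u : nat * nat) (cs : seq nat) (t : nat) : seq (nat * nat) :=
  match cs with
  | [::] => hrun u.1 t u.2
  | c :: cs' => hrun u.1 c u.2 ++ (c, u.2.+1) :: mk (c, u.2.+1) cs' t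
  end.

Fixpoint vcols (u : nat * nat) (q : seq (nat * nat)) : seq nat :=
  match q with
  | [::] => [::]
  | v :: q' => if v.2 == u.2.+1 then v.1 :: vcols v q' else vcols v q'
  end.

Lemma hrun_nil x c y : c <= x -> hrun x c y = [::].
Proof. by move=> h; rewrite /hrun (_ : c - x = 0) //; lia. Qed.

Lemma hrun_cons x c y : x < c -> hrun x c y = (x.+1, y) :: hrun x.+1 c y.
Proof. by move=> h; rewrite /hrun (_ : c - x = (c - x.+1).+1) //; lia. Qed.

Lemma hrun_good (P : nat * nat -> bool) x c y :
  (forall x k y, P (x, y) -> x <= k -> P (k, y)) ->
  x <= c -> P (x, y) ->
  [&& path lattice_step (x, y) (hrun x c y), last (x, y) (hrun x c y) == (c, y)
    & all P (hrun x c y)].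
Proof.
move=> HP le Px; rewrite -(subnKC le); move: (c - x) => d; clear le.
elim: d x Px => [|d IH] x Px.
  by rewrite addn0 hrun_nil //= eqxx.
rewrite hrun_cons; last lia.
have Px1 : P (x.+1, y) by apply: HP Px _.
have := IH x.+1 Px1; rewrite addSnnS => /and3P [h1 h2 h3].
by rewrite /= h1 h2 h3 Px1 /lattice_step /= eqxx.
Qed.

Lemma mk_good (A : nat -> nat) (P : nat * nat -> bool) :
  (forall x k y, P (x, y) -> x <= k -> P (k, y)) ->
  forall m y, (forall j, y <= j <= y + m -> A j <= A j.+1) ->
  (forall j, y <= j <= y + m -> P (A j, j)) ->
  let q := mk (A y, y) (map A (iota y.+1 m)) (A (y + m).+1) in
  [&& path lattice_step (A y, y) q, last (A y, y) q == (A (y + m).+1, y + m) & all P q].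
Proof.
move=> HP; elim=> [|m IH] y HA HPA /=.
  rewrite addn0; apply: hrun_good => //.
    by apply: HA; rewrite addn0 leqnn.
  by apply: HPA; rewrite addn0 leqnn.
have yy : y <= y <= y + m.+1 by lia.
have h1 := hrun_good P (A y) (A y.+1) y HP (HA y yy) (HPA y yy).
move/and3P: h1 => [p1 l1 a1].
have := IH y.+1.
rewrite -addSnnS.
have HA' : forall j, y.+1 <= j <= y.+1 + m -> A j <= A j.+1.
  by move=> j /andP [a b]; apply: HA; rewrite -addSnnS b andbT; lia.
have HPA' : forall j, y.+1 <= j <= y.+1 + m -> P (A j, j).
  by move=> j /andP [a b]; apply: HPA; rewrite -addSnnS b andbT; lia.
move=> /(_ HA' HPA') /and3P [p2 l2 a2].
rewrite cat_path last_cat all_cat p1 a1 /= (eqP l1) p2 l2 a2.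
rewrite /lattice_step /= !eqxx orbT /= andbT.
apply: HPA; lia.
Qed.

Lemma all_hrun2 x c y : all (fun v => v.2 == y) (hrun x c y).
Proof. by rewrite all_map; apply/allP => k _ /=. Qed.

Lemma vcols_eq2 u w r : u.2 = w.2 -> vcols u r = vcols w r.
Proof. by case: r => //= v r ->. Qed.

Lemma vcols_cat u w l r : all (fun v => v.2 == u.2) l -> w.2 = u.2 ->
  vcols u (l ++ r) = vcols w r.
Proof.
elim: l u => [|v l IH] u /=; first by move=> _ e; apply: vcols_eq2.
move=> /andP [/eqP e al] ew; rewrite e (_ : (u.2 == u.2.+1) = false); last lia.
by apply: IH; rewrite ?e.
Qed.

Lemma vcols_mk u cs t : vcols u (mk u cs t) = cs.
Proof.
elim: cs u => [|c cs IH] u /=.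
  by rewrite -[hrun _ _ _]cats0 (vcols_cat _ u) ?all_hrun2.
rewrite (vcols_cat _ (c, u.2)) ?all_hrun2 //= eqxx IH //.
Qed.

Lemma mem_mk u cs t i : i < size cs -> (nth 0 cs i, u.2 + i.+1) \in mk u cs t.
Proof.
elim: cs u i => [|c cs IH] u i //=.
case: i => [|i] /= hi; first by rewrite mem_cat inE addn1 eqxx orbT.
rewrite ltnS in hi; rewrite mem_cat inE; apply/orP; right; apply/orP; right.
by have := IH (c, u.2.+1) i hi; rewrite /= addSnnS.
Qed.

Lemma mk_shift u cs t : u.1 < head t cs ->
  mk u cs t = (u.1.+1, u.2) :: mk (u.1.+1, u.2) cs t.
Proof. by case: cs => [|c cs] /= h; rewrite hrun_cons. Qed.

Lemma vcols_head u q : path lattice_step u q -> u.1 <= head (last u q).1 (vcols u q).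
Proof.
elim: q u => [|v q IH] u //=.
case/andP => /orP [] /eqP -> hp; have := IH _ hp => /=.
  by rewrite (_ : (u.2 == u.2.+1) = false) //; lia.
by rewrite eqxx.
Qed.

Lemma mk_vcols u q : path lattice_step u q -> mk u (vcols u q) (last u q).1 = q.
Proof.
elim: q u => [|v q IH] [x y] /=; first by rewrite hrun_nil.
case/andP => /orP [] /eqP -> hp /=.
  rewrite (_ : (y == y.+1) = false); last lia.
  rewrite mk_shift /=; first by rewrite IH.
  by have := vcols_head _ _ hp.
by rewrite eqxx /= hrun_nil // IH.
Qed.

Lemma vcols_size u q : path lattice_step u q -> size (vcols u q) + u.2 = (last u q).2.
Proof.
elim: q u => [|v q IH] [x y] //=.
case/andP => /orP [] /eqP -> hp /=; have := IH _ hp => /= <-.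
  by rewrite (_ : (y == y.+1) = false) //; lia.
by rewrite eqxx /= addSnnS.
Qed.

Lemma last_ge u q : path lattice_step u q -> u.1 <= (last u q).1.
Proof.
elim: q u => [|v q IH] [x y] //=.
case/andP => /orP [] /eqP -> hp /=; have := IH _ hp => /=; lia.
Qed.

Lemma vcols_sorted u q : path lattice_step u q -> path leq u.1 (vcols u q).
Proof.
elim: q u => [|v q IH] [x y] //=.
case/andP => /orP [] /eqP -> hp /=; have := IH _ hp => /=.
  rewrite (_ : (y == y.+1) = false); last lia.
  case: (vcols _ q) => //= c r /andP [h1 h2]; rewrite h2 andbT; lia.
by rewrite eqxx /= leqnn.
Qed.

Lemma vcols_le u q : path lattice_step u q -> all (fun c => c <= (last u q).1) (vcols u q).
Proof.
elim: q u => [|v q IH] [x y] //=.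
case/andP => /orP [] /eqP -> hp /=; have := IH _ hp => /=.
  by rewrite (_ : (y == y.+1) = false) //; lia.
by rewrite eqxx /= => ->; rewrite andbT; have := last_ge _ _ hp.
Qed.
Set Implicit Arguments. Unset Strict Implicit.

Definition Acol n (h : {ffun 'I_n.-1 -> 'I_n.-1}) (j : nat) : nat :=
  match j with 0 => 0 | j'.+1 => oapp (fun k : 'I_n.-1 => (h k).+1) n.-1 (insub j') end.

Lemma Acol_ord n (h : {ffun 'I_n.-1 -> 'I_n.-1}) (k : 'I_n.-1) : Acol h (val k).+1 = (h k).+1.
Proof. by rewrite /Acol valK. Qed.

Lemma Acol_out n (h : {ffun 'I_n.-1 -> 'I_n.-1}) j : n.-1 <= j -> Acol h j.+1 = n.-1.
Proof. by move=> hj; rewrite /Acol insubN // -leqNgt. Qed.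

Lemma Acol_ord' n (h : {ffun 'I_n.-1 -> 'I_n.-1}) j (hj : j < n.-1) :
  Acol h j.+1 = (h (Ordinal hj)).+1.
Proof. exact: (Acol_ord h (Ordinal hj)). Qed.

Lemma Acol0 n (h : {ffun 'I_n.-1 -> 'I_n.-1}) : Acol h 0 = 0.
Proof. by []. Qed.

Arguments Acol : simpl never.

Definition Pp (X : finType) n (g s : n.-tuple X) (u : nat * nat) : bool :=
  (u.2 <= u.1) && ~~ roadblock g s u.

Lemma Pp_mono (X : finType) n (g s : n.-tuple X) x k y :
  Pp g s (x, y) -> x <= k -> Pp g s (k, y).
Proof.
rewrite /Pp /roadblock /= => /andP [h1 h2] hk.
apply/andP; split; first lia.
apply/negP => /and4P [a b c d]; move/negP: h2; apply; apply/and4P; split => //; lia.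
Qed.

Lemma all_in_s (X : finType) n (s : n.-tuple X) : uniq s -> #|X| = n -> forall z, z \in s.
Proof.
move=> us cX z.
have E : #|s| = #|X| by rewrite (card_uniqP us) size_tuple cX.
by have /(subset_cardP E) := subset_predT (mem s) => /(_ z) ->.
Qed.

Lemma pigeon (X : finType) n (s : n.-tuple X) (r : seq X) :
  uniq r -> {subset r <= s} -> size r <= \max_(z <- r) sigma s z.
Proof.
move=> ur sub.
rewrite -(size_map (sigma s)) -[X in _ <= X](size_iota 1).
apply: uniq_leq_size.
  rewrite map_inj_in_uniq // => a b ha hb; rewrite /sigma => -[e].
  exact: (index_inj a (sub a ha) (sub b hb) e).
move=> v /mapP [z hz ->]; rewrite mem_iota /= add1n ltnS.
by apply: leq_bigmax_seq.
Qed.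

Unset Implicit Arguments.
Theorem proposition1 (X : finType) (n : nat) (g s : n.-tuple X) :
  2 <= n -> #|X| = n -> uniq g -> uniq s ->
  exists f : {h : {ffun 'I_n.-1 -> 'I_n.-1} | coalescent_history g s h} ->
             seq (nat * nat),
    injective f /\
    (forall p : seq (nat * nat), good_path g s p <-> exists h, f h = p).
Proof.
move=> n2 cX ug us.
have ins := all_in_s us cX.
pose f := fun hh : {h | coalescent_history g s h} =>
  (0,0) :: mk (0,0) (map (Acol (proj1_sig hh)) (iota 1 n.-1)) n.-1.
exists f; split.
  move=> [h1 H1] [h2 H2] /= [] /(congr1 (vcols (0,0))); rewrite !vcols_mk => e.
  have hh : h1 = h2.
    apply/ffunP => k; apply: val_inj; apply: succn_inj.
    have := congr1 (fun l => nth 0 l k) e => /=.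
    by rewrite !(nth_map 0) ?size_iota ?ltn_ord // nth_iota ?ltn_ord // add1n !Acol_ord.
  by subst; f_equal; apply: proof_irrelevance.
move=> p; split.
  case: p => [|u q] //; rewrite /good_path /monotonic_path.
  move=> /and3P [/and3P [/eqP u0 pq lq] diag road]; subst u.
  move: diag road => /andP [_ diag] /andP [_ road].
  have {}diag : all (fun u => u.2 <= u.1) q := diag.
  have {}road : all (fun u => ~~ roadblock g s u) q := road.
  set cs := vcols (0,0) q.
  have Hq : mk (0,0) cs n.-1 = q by have := mk_vcols _ _ pq; rewrite (eqP lq).
  have Hsz : size cs = n.-1 by have := vcols_size _ _ pq; rewrite (eqP lq) addn0.
  have Hsort : sorted leq cs := path_sorted (vcols_sorted _ _ pq).
  have Hle : all (fun c => c <= n.-1) cs by have := vcols_le _ _ pq; rewrite (eqP lq).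
  have Hmem : forall i, i < n.-1 -> (nth 0 cs i, i.+1) \in q.
    move=> i hi; rewrite -Hq; have := @mem_mk (0,0) cs n.-1 i; rewrite /= add0n; apply.
    by rewrite Hsz.
  have Hdiag : forall i, i < n.-1 -> i.+1 <= nth 0 cs i.
    by move=> i hi; have := allP diag _ (Hmem i hi).
  have Hroad : forall i, i < n.-1 -> ~~ roadblock g s (nth 0 cs i, i.+1).
    by move=> i hi; have := allP road _ (Hmem i hi).
  have Hub : forall i, i < n.-1 -> nth 0 cs i <= n.-1.
    by move=> i hi; apply: (allP Hle); rewrite mem_nth // Hsz.
  have HF : forall i, i < n.-1 -> Fmax g s i.+1 <= nth 0 cs i.
    move=> i hi; rewrite leqNgt; apply/negP => hlt; move/negP: (Hroad i hi); apply.
    have := Hdiag i hi; have := Hub i hi.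
    by rewrite /roadblock => ? ?; apply/and4P; split => //; lia.
  pose h := [ffun k : 'I_n.-1 => insubd k (nth 0 cs k).-1].
  have hv : forall k, val (h k) = (nth 0 cs k).-1.
    move=> k; rewrite ffunE val_insubd.
    have := Hdiag k (ltn_ord k); have := Hub k (ltn_ord k).
    case: ifP => // /negbT; lia.
  have Hh : coalescent_history g s h.
    split.
      move=> v y; rewrite /leaf_below_edge /leaf_below_node /node_of hv => hy.
      have yin : y \in take v.+2 g.
        rewrite in_take_leq; last by rewrite size_tuple; have := ltn_ord v; lia.
        by move: hy; rewrite /sigma.
      have hb : sigma s y <= \max_(z <- take v.+2 g) sigma s z by apply: leq_bigmax_seq.
      have HFv := HF v (ltn_ord v); rewrite /Fmax in HFv.
      have := Hdiag v (ltn_ord v); lia.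
    move=> v1 v2; rewrite /node_desc /edge_desc /node_of !hv => le.
    have := @sorted_leq_nth _ leq leq_trans leqnn 0 cs Hsort v2 v1.
    rewrite !inE Hsz !ltn_ord => /(_ isT isT); rewrite ltnS in le => /(_ le); lia.
  exists (exist _ h Hh); rewrite /f /=; congr (_ :: _); rewrite -Hq; congr mk.
  apply: (@eq_from_nth _ 0); rewrite ?size_map ?size_iota ?Hsz // => i hi.
  rewrite ?size_map ?size_iota in hi.
  rewrite (nth_map 0) ?size_iota // nth_iota // add1n (Acol_ord' h hi) hv /=.
  by rewrite prednK //; have := Hdiag i hi; lia.
case=> [[h [H1 H2]]] <-; rewrite /f /=.
have HP := @Pp_mono X n g s.
have HA : forall j, 0 <= j <= 0 + n.-1 -> Acol h j <= Acol h j.+1.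
  move=> [|j] hj; first by rewrite Acol0.
  have hj' : j < n.-1 by lia.
  rewrite (Acol_ord' h hj').
  case: (ltnP j.+1 n.-1) => hj2.
    rewrite (Acol_ord' h hj2) ltnS.
    have := H2 (Ordinal hj2) (Ordinal hj'); rewrite /node_desc /edge_desc /node_of /=.
    by apply; lia.
  by rewrite Acol_out.
have HPA : forall j, 0 <= j <= 0 + n.-1 -> Pp g s (Acol h j, j).
  move=> [|j] hj; first by rewrite Acol0.
  have hj' : j < n.-1 by lia.
  rewrite (Acol_ord' h hj'); set k := Ordinal hj'.
  have hb : \max_(z <- take j.+2 g) sigma s z <= (h k).+2.
    apply/bigmax_leqP_seq => z zin _; apply: (H1 k z).
    rewrite /leaf_below_node /node_of /=.
    rewrite in_take_leq in zin; last by rewrite size_tuple; lia.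
    by rewrite /sigma; lia.
  have hp : j.+2 <= \max_(z <- take j.+2 g) sigma s z.
    have := pigeon (s:=s) (take_uniq j.+2 ug) (fun z _ => ins z).
    by rewrite size_takel // size_tuple; lia.
  rewrite /Pp /roadblock /Fmax /=; apply/andP; split; first lia.
  by apply/negP => /and3P [_ _]; lia.
have := mk_good (Acol h) (Pp g s) HP n.-1 0 HA HPA; rewrite /= add0n Acol_out // Acol0 => /and3P [p1 l1 a1].
rewrite /good_path /monotonic_path /not_above_diagonal /= p1 l1 /=.
apply/andP; split; first by apply: sub_all a1 => u /andP [].
by apply: sub_all a1 => u /andP [].
Qed.
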